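(* Let $n\ge3$ and $\beta=\frac n{n-2}$. For every $x\ge0$ the infinite product $\prod_{i=0}^\infty\left(1+\frac{\beta^i}{\sqrt{2\beta^i-1}}x\right)^{\beta^{-i}}$ converges, defining a continuous function $\xi(x)$ on $[0,\infty)$, and $$\xi(x)\le e^{\frac n2\cdot\frac x{1+x}}(1+x)^{n/2}\quad\text{for all }x\ge0.$$ *)

(* Defs.v *)
From Stdlib Require Import Reals Lra Lia.
Open Scope R_scope.

Definition beta (n : nat) : R := INR n / (INR n - 2).

Definition xi_factor (n : nat) (i : nat) (x : R) : R :=
  Rpower (1 + beta n ^ i / sqrt (2 * beta n ^ i - 1) * x) (/ beta n ^ i).

Fixpoint xi_partial (n : nat) (N : nat) (x : R) : R :=
  match N with
  | O => xi_factor n 0 x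
  | S N' => xi_partial n N' x * xi_factor n (S N') x
  end.

(* Main.v *)
Require Import Defs.
From Stdlib Require Import Reals.
From Stdlib Require Import Lra Lia.
Open Scope R_scope.

Lemma ln_le' x y : 0 < x -> x <= y -> ln x <= ln y.
Proof. intros H1 H2. destruct H2 as [H|H]. left; now apply ln_increasing. subst; lra. Qed.

Lemma exp_le' x y : x <= y -> exp x <= exp y.
Proof. intros [H|H]. left; now apply exp_increasing. subst; lra. Qed.

Definition aa (b:R) (i:nat) : R := b^i / sqrt (2*b^i - 1).
Definition fn (b:R) (i:nat) (y:R) : R := / b^i * ln (1 + aa b i * Rabs y).

Lemma sqrt_pow b i : 0 <= b -> sqrt (b^i) = sqrt b ^ i.
Proof.
  intro Hb. induction i; simpl. apply sqrt_1.
  rewrite sqrt_mult_alt by lra. now rewrite IHi.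
Qed.

Section B.
Variable b : R.
Hypothesis hb : 1 < b.

Lemma aa_facts i : 1 <= b^i /\ 0 < sqrt (2*b^i-1) /\ 1 <= aa b i /\
   / b^i * aa b i <= (/ sqrt b)^i.
Proof.
  assert (Hc : 1 <= b^i) by (apply pow_R1_Rle; lra).
  assert (Hs : 0 < sqrt (2*b^i-1)) by (apply sqrt_lt_R0; lra).
  assert (Hs2 : sqrt (b^i) <= sqrt (2*b^i-1)) by (apply sqrt_le_1_alt; lra).
  assert (Hs3 : 0 < sqrt (b^i)) by (apply sqrt_lt_R0; lra).
  assert (Hs4 : sqrt (2*b^i-1) <= b^i).
  { set (c := b^i) in *. apply Rle_trans with (sqrt (c^2)).
    apply sqrt_le_1_alt. simpl. assert (0 <= (c-1)*(c-1)) by apply Rle_0_sqr. nra.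
    rewrite sqrt_pow2 by lra. lra. }
  repeat split; auto.
  - unfold aa. apply (Rmult_le_reg_r (sqrt (2*b^i-1))); auto.
    unfold Rdiv. rewrite Rmult_assoc, Rinv_l by lra. lra.
  - unfold aa. rewrite pow_inv, <- sqrt_pow by lra.
    replace (/ b ^ i * (b ^ i / sqrt (2 * b ^ i - 1))) with (/ sqrt (2*b^i-1)) by (field; lra).
    apply Rinv_le_contravar; auto.
Qed.

Lemma key i y : 0 <= y ->
  0 <= fn b i y /\
  fn b i y <= (/b)^i * ln (1+y) + ((/ sqrt b)^i - (/b)^i) * (y/(1+y)).
Proof.
  intro Hy. destruct (aa_facts i) as [Hc [Hs [Ha Hq]]].
  unfold fn. rewrite Rabs_pos_eq by lra. set (a := aa b i) in *.
  set (c := b^i) in *. set (t := y/(1+y)).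
  assert (Ht : 0 <= t) by (unfold t; apply Rmult_le_pos; [lra| left; apply Rinv_0_lt_compat; lra]).
  assert (Hic : 0 < / c) by (apply Rinv_0_lt_compat; lra).
  split.
  - apply Rmult_le_pos; [lra|]. rewrite <- ln_1. apply ln_le'; nra.
  - assert (E : 1 + a*y <= (1+y) * exp ((a-1)*t)).
    { assert (H1 := exp_ineq1_le ((a-1)*t)).
      apply Rle_trans with ((1+y)*(1+(a-1)*t)); [|apply Rmult_le_compat_l; lra].
      right. unfold t. field. lra. }
    assert (E2 : ln (1 + a*y) <= ln (1+y) + (a-1)*t).
    { rewrite <- (ln_exp ((a-1)*t)), <- ln_mult by (try apply exp_pos; lra).
      apply ln_le'; nra. }
    rewrite pow_inv. fold c.
    apply Rle_trans with (/c * (ln (1+y) + (a-1)*t)); [apply Rmult_le_compat_l; lra|].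
    nra.
Qed.

Lemma geom r : 0 <= r < 1 -> Un_cv (fun N => sum_f_R0 (fun i => r^i) N) (/ (1 - r)).
Proof.
  intros Hr eps He. destruct (GP_infinite r ltac:(rewrite Rabs_pos_eq; lra) eps He) as [N HN].
  exists N. intros m Hm. specialize (HN m Hm).
  rewrite (sum_eq _ (fun i => 1 * r^i)); auto. intros; ring.
Qed.

Lemma cv_lin A B u v la lb :
  Un_cv (fun N => sum_f_R0 u N) la -> Un_cv (fun N => sum_f_R0 v N) lb ->
  Un_cv (fun N => sum_f_R0 (fun i => A * u i + B * v i) N) (A*la + B*lb).
Proof.
  intros Hu Hv.
  assert (H : Un_cv (fun N => A * sum_f_R0 u N + B * sum_f_R0 v N) (A*la + B*lb)).
  { apply CV_plus; apply CV_mult; auto; intros e He; exists 0%nat; intros;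
    rewrite Rdist_eq; lra. }
  intros e He. destruct (H e He) as [N HN]. exists N. intros m Hm.
  rewrite plus_sum.
  rewrite (sum_eq (fun i => A * u i) (fun i => u i * A)) by (intros; ring).
  rewrite (sum_eq (fun i => B * v i) (fun i => v i * B)) by (intros; ring).
  rewrite <- !scal_sum. auto.
Qed.

Lemma q_facts : 0 <= / sqrt b < 1 /\ 0 <= / b < 1.
Proof.
  assert (H1 : 1 < sqrt b) by (rewrite <- sqrt_1; apply sqrt_lt_1_alt; lra).
  split; split.
  - left; apply Rinv_0_lt_compat; lra.
  - rewrite <- Rinv_1. apply Rinv_lt_contravar; lra.
  - left; apply Rinv_0_lt_compat; lra.
  - rewrite <- Rinv_1. apply Rinv_lt_contravar; lra.
Qed.

Lemma cvn : CVN_R (fn b).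
Proof.
  intro r. destruct q_facts as [Hq Hp].
  exists (fun i => ln (1+r) * (/b)^i + 1 * (/ sqrt b)^i).
  exists (ln (1+r) * / (1 - /b) + 1 * /(1 - / sqrt b)).
  assert (Hlr : 0 <= ln (1+r)) by (rewrite <- ln_1; apply ln_le'; destruct r; simpl; lra).
  split.
  - intros e He. destruct (cv_lin (ln (1+r)) 1 _ _ _ _ (geom _ Hp) (geom _ Hq) e He) as [N HN].
    exists N. intros m Hm. rewrite (sum_eq _ (fun i => ln (1+r) * (/b)^i + 1 * (/ sqrt b)^i)).
    auto. intros i _. apply Rabs_pos_eq.
    assert (0 <= (/b)^i) by (apply pow_le; lra). assert (0 <= (/sqrt b)^i) by (apply pow_le; lra). nra.
  - intros i y Hy. unfold Boule in Hy. rewrite Rminus_0_r in Hy.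
    assert (Hy0 : 0 <= Rabs y) by apply Rabs_pos.
    assert (Hfe : fn b i y = fn b i (Rabs y)) by (unfold fn; now rewrite Rabs_Rabsolu).
    rewrite Hfe. destruct (key i (Rabs y) Hy0) as [K1 K2].
    rewrite Rabs_pos_eq by auto.
    assert (Hl : ln (1 + Rabs y) <= ln (1+r)) by (apply ln_le'; lra).
    assert (Ht : 0 <= Rabs y / (1 + Rabs y) <= 1).
    { split. apply Rmult_le_pos; [lra| left; apply Rinv_0_lt_compat; lra].
      apply (Rmult_le_reg_r (1 + Rabs y)); [lra|]. unfold Rdiv. rewrite Rmult_assoc, Rinv_l by lra. lra. }
    assert (0 <= (/b)^i) by (apply pow_le; lra). assert (0 <= (/sqrt b)^i) by (apply pow_le; lra).
    nra.
Qed.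

Lemma fn_cont i : continuity (fn b i).
Proof.
  intro x. destruct (aa_facts i) as [Hc [Hs [Ha Hq]]].
  unfold fn. apply continuity_pt_mult. apply continuity_pt_const; intros ? ?; auto.
  apply (continuity_pt_comp (fun y => 1 + aa b i * Rabs y) ln).
  - apply continuity_pt_plus. apply continuity_pt_const; intros ? ?; auto.
    apply continuity_pt_mult. apply continuity_pt_const; intros ? ?; auto.
    apply Rcontinuity_abs.
  - assert (H : 0 < 1 + aa b i * Rabs x) by (assert (0 <= Rabs x) by apply Rabs_pos; nra).
    apply derivable_continuous_pt. exists (/ (1 + aa b i * Rabs x)). now apply derivable_pt_lim_ln.
Qed.

End B.

Lemma partial_eq n N x : 0 <= x -> xi_partial n N x = exp (SP (fn (beta n)) N x).
Proof.
  intro Hx. assert (F : forall i, xi_factor n i x = exp (fn (beta n) i x)).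
  { intro i. unfold xi_factor, fn, aa, Rpower. rewrite Rabs_pos_eq by lra. reflexivity. }
  induction N; simpl; unfold SP; simpl. apply F.
  rewrite IHN, F. unfold SP. now rewrite exp_plus.
Qed.

Theorem lemmaB1 (n : nat) (hn : (3 <= n)%nat) :
  exists xi : R -> R,
    (forall x, 0 <= x -> Un_cv (fun N => xi_partial n N x) (xi x)) /\
    (forall x, 0 <= x -> limit1_in xi (fun y => 0 <= y) (xi x) x) /\
    (forall x, 0 <= x ->
       xi x <= exp (INR n / 2 * (x / (1 + x))) * Rpower (1 + x) (INR n / 2)).
Proof.
  assert (Hn : 3 <= INR n) by (replace 3 with (INR 3) by (simpl; ring); apply le_INR; auto).
  set (b := beta n).
  assert (Hb : 1 < b).
  { unfold b, beta. apply (Rmult_lt_reg_r (INR n - 2)); [lra|].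
    unfold Rdiv. rewrite Rmult_assoc, Rinv_l by lra. lra. }
  pose (cv := CVN_R_CVS (fn b) (cvn b Hb)).
  set (S := SFL (fn b) cv).
  assert (Scont : continuity S) by (apply SFL_continuity; [apply cvn | apply fn_cont]; auto).
  assert (Scv : forall x, Un_cv (fun N => SP (fn b) N x) (S x)).
  { intro x. unfold S, SFL. destruct (cv x) as [l Hl]. exact Hl. }
  exists (fun y => exp (S y)). split; [|split].
  - intros x Hx e He. destruct (continuity_seq exp _ _ (derivable_continuous_pt _ _ (derivable_pt_exp (S x))) (Scv x) e He) as [N HN].
    exists N. intros m Hm. rewrite partial_eq by auto. apply HN; auto.
  - intros x Hx.
    assert (C : continuity_pt (comp exp S) x).
    { apply continuity_pt_comp; auto. apply derivable_continuous_pt, derivable_pt_exp. }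
    intros e He. destruct (C e He) as [d [Hd Hd2]]. exists d. split; auto.
    intros y [Hy1 Hy2]. destruct (Req_dec x y) as [<-|Hne].
    + simpl. unfold Rdist. rewrite Rminus_diag, Rabs_R0. lra.
    + apply (Hd2 y). split; auto. split; auto. constructor.
  - intros x Hx. destruct (q_facts b Hb) as [Hq Hp].
    set (t := x / (1+x)).
    assert (Ht : 0 <= t) by (unfold t; apply Rmult_le_pos; [lra| left; apply Rinv_0_lt_compat; lra]).
    assert (Bnd : S x <= (ln (1+x) - t) * / (1 - /b) + t * / (1 - / sqrt b)).
    { refine (Rle_cv_lim _ (Scv x) (cv_lin (ln (1+x) - t) t _ _ _ _ (geom _ Hp) (geom _ Hq))).
      intro N. unfold SP. apply sum_Rle. intros i _. destruct (key b Hb i x Hx) as [_ K]. fold t in K. lra. }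
    assert (EB : / (1 - / b) = INR n / 2) by (unfold b, beta; field; lra).
    assert (Hs : 1 < sqrt b) by (rewrite <- sqrt_1; apply sqrt_lt_1_alt; lra).
    assert (EQ : / (1 - / sqrt b) <= INR n).
    { assert (Ebs : b = sqrt b * sqrt b) by (rewrite sqrt_sqrt; lra).
      assert (En : INR n = 2 * b / (b - 1)) by (unfold b, beta; field; lra).
      rewrite En. set (s := sqrt b) in *. rewrite Ebs.
      replace (2 * (s * s) / (s * s - 1)) with (/ (1 - / s) + s/(s+1)) by (field; lra).
      assert (0 <= s/(s+1)) by (apply Rmult_le_pos; [lra| left; apply Rinv_0_lt_compat; lra]). lra. }
    unfold Rpower. rewrite <- exp_plus. apply exp_le'. fold t. rewrite EB in Bnd.
    assert (t * / (1 - / sqrt b) <= t * INR n) by (apply Rmult_le_compat_l; lra).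
    lra.
Qed.
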